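(* For every integer $k>4$, \[\overline{\alpha}(\{1,4,k\})=\begin{cases}\frac{2k}{5k+5} & k\equiv 0\pmod 5,\\ \frac25 & k\equiv 1\pmod 5,\\ \frac{2k+1}{5k+5} & k\equiv 2\pmod 5,\\ \frac{2k-1}{5k+5} & k\equiv 3\pmod 5,\\ \frac25 & k\equiv 4\pmod 5.\end{cases}\]
   Context: For a finite set $S$ of positive integers, the distance graph $G(S)$ has vertex set $\mathbb{Z}$, with $i,j$ adjacent iff $|i-j|\in S$. The density of $A\subseteq\mathbb{Z}$ is $\delta(A)=\limsup_{N\to\infty}\frac{|A\cap[-N,N]|}{2N+1}$, and the independence ratio $\overline{\alpha}(S)$ is the supremum of $\delta(A)$ over independent sets $A$ of $G(S)$. *)

(* Defs.v *)
From Stdlib Require Import Reals Lra ZArith Classical ClassicalEpsilon.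
From Coquelicot Require Import Coquelicot.
Open Scope R_scope.

Definition S14k (k : Z) : Z -> Prop := fun d => d = 1%Z \/ d = 4%Z \/ d = k.

Definition independent (S : Z -> Prop) (A : Z -> Prop) : Prop :=
  forall i j : Z, A i -> A j -> ~ S (Z.abs (i - j)).

Definition ind (A : Z -> Prop) (z : Z) : R :=
  if excluded_middle_informative (A z) then 1 else 0.

Definition count_in (A : Z -> Prop) (N : nat) : R :=
  sum_f_R0 (fun m => ind A (Z.of_nat m - Z.of_nat N)%Z) (2 * N).

Definition density (A : Z -> Prop) : Rbar :=
  LimSup_seq (fun N => count_in A N / (2 * INR N + 1)).

Definition indep_ratio (S : Z -> Prop) : Rbar :=
  Lub_Rbar (fun d => exists A, independent S A /\ density A = Finite d).

(* Main.v *)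
Require Import Defs.
From Stdlib Require Import Reals ZArith Lia Lra Classical ClassicalEpsilon.
From Coquelicot Require Import Coquelicot.
Open Scope R_scope.

Open Scope Z_scope.

Definition av (A : Z -> Prop) (x : Z) : Z :=
  if excluded_middle_informative (A x) then 1 else 0.

Fixpoint sumc (f : Z -> Z) (u : Z) (T : nat) : Z :=
  match T with O => 0 | S T' => sumc f u T' + f (u + Z.of_nat T') end.

Definition cntZ (A : Z -> Prop) (x L : Z) : Z := sumc (av A) x (Z.to_nat L).

Lemma av_b A x : 0 <= av A x <= 1.
Proof. unfold av; destruct excluded_middle_informative; lia. Qed.

Lemma av_1 A x : A x -> av A x = 1.
Proof. unfold av; destruct excluded_middle_informative; tauto. Qed.
Lemma av_0 A x : ~ A x -> av A x = 0.
Proof. unfold av; destruct excluded_middle_informative; tauto. Qed.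
Lemma av_A A x : av A x = 1 -> A x.
Proof. unfold av; destruct excluded_middle_informative; [auto|lia]. Qed.

Lemma sumc_add f u T1 T2 :
  sumc f u (T1 + T2) = sumc f u T1 + sumc f (u + Z.of_nat T1) T2.
Proof.
  induction T2; simpl.
  - rewrite Nat.add_0_r; lia.
  - rewrite Nat.add_succ_r; simpl. rewrite IHT2.
    replace (u + Z.of_nat (T1 + T2)) with (u + Z.of_nat T1 + Z.of_nat T2) by lia. lia.
Qed.

Lemma sumc_ext f g u T : (forall t, 0 <= t < Z.of_nat T -> f (u + t) = g (u + t)) ->
  sumc f u T = sumc g u T.
Proof.
  induction T; simpl; intros H; auto.
  rewrite IHT by (intros; apply H; lia). rewrite H by lia. auto.
Qed.

Lemma sumc_plus f g u T : sumc (fun x => f x + g x) u T = sumc f u T + sumc g u T.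
Proof. induction T; simpl; lia. Qed.

Lemma sumc_shift h c u T : sumc (fun x => h (x + c)) u T = sumc h (u + c) T.
Proof. induction T; simpl; auto. rewrite IHT. f_equal. f_equal. lia. Qed.

Lemma cnt_b A x L : 0 <= L -> 0 <= cntZ A x L <= L.
Proof.
  intros HL. unfold cntZ.
  assert (forall T, 0 <= sumc (av A) x T <= Z.of_nat T).
  { induction T; simpl; [lia|]. pose proof (av_b A (x + Z.of_nat T)). lia. }
  specialize (H (Z.to_nat L)). rewrite Z2Nat.id in H by lia. exact H.
Qed.

Lemma cnt_split A x L L1 L2 y : 0 <= L1 -> 0 <= L2 -> L = L1 + L2 -> y = x + L1 ->
  cntZ A x L = cntZ A x L1 + cntZ A y L2.
Proof.
  intros H1 H2 -> ->. unfold cntZ. rewrite Z2Nat.inj_add by lia.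
  rewrite sumc_add. rewrite Z2Nat.id by lia. auto.
Qed.

Lemma cnt1 A x : cntZ A x 1 = av A x.
Proof. unfold cntZ; simpl. rewrite Z.add_0_r. auto. Qed.
Lemma cnt2 A x x1 : x1 = x + 1 -> cntZ A x 2 = av A x + av A x1.
Proof. intros ->. unfold cntZ; simpl. rewrite Z.add_0_r. auto. Qed.
Lemma cnt3 A x x1 x2 : x1 = x + 1 -> x2 = x + 2 -> cntZ A x 3 = av A x + av A x1 + av A x2.
Proof. intros -> ->. unfold cntZ; simpl. rewrite Z.add_0_r. auto. Qed.
Lemma cnt4 A x x1 x2 x3 : x1 = x + 1 -> x2 = x + 2 -> x3 = x + 3 ->
  cntZ A x 4 = av A x + av A x1 + av A x2 + av A x3.
Proof. intros -> -> ->. unfold cntZ; simpl. rewrite Z.add_0_r. auto. Qed.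
Lemma cnt5 A x x1 x2 x3 x4 : x1 = x + 1 -> x2 = x + 2 -> x3 = x + 3 -> x4 = x + 4 ->
  cntZ A x 5 = av A x + av A x1 + av A x2 + av A x3 + av A x4.
Proof. intros -> -> -> ->. unfold cntZ; simpl. rewrite Z.add_0_r. auto. Qed.

Lemma pairc S A : independent S A -> forall x y, S (Z.abs (x - y)) -> av A x + av A y <= 1.
Proof.
  intros HI x y HS. unfold av.
  destruct (excluded_middle_informative (A x)) as [Hx|Hx];
  destruct (excluded_middle_informative (A y)) as [Hy|Hy]; try lia.
  exfalso; exact (HI x y Hx Hy HS).
Qed.

Section Blocks.
Variable k : Z.
Variable A : Z -> Prop.
Hypothesis HI : independent (S14k k) A.

Lemma pr1 x y : y = x + 1 -> av A x + av A y <= 1.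
Proof. intros ->. apply (pairc _ _ HI). unfold S14k. left. rewrite Z.sub_add_distr, Z.sub_diag. reflexivity. Qed.
Lemma pr4 x y : y = x + 4 -> av A x + av A y <= 1.
Proof. intros ->. apply (pairc _ _ HI). unfold S14k. right; left.
  replace (x - (x+4)) with (-4) by lia. reflexivity. Qed.
Lemma prk x y : y = x + k -> 0 <= k -> av A x + av A y <= 1.
Proof. intros -> Hk. apply (pairc _ _ HI). unfold S14k. right; right.
  replace (x - (x+k)) with (-k) by lia. rewrite Z.abs_opp. apply Z.abs_eq; lia. Qed.

Lemma blk5 x : cntZ A x 5 <= 2.
Proof.
  rewrite (cnt5 A x (x+1) (x+2) (x+3) (x+4)) by lia.
  pose proof (pr1 x (x+1) eq_refl). pose proof (pr1 (x+1) (x+2) ltac:(lia)).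
  pose proof (pr1 (x+2) (x+3) ltac:(lia)). pose proof (pr1 (x+3) (x+4) ltac:(lia)).
  pose proof (pr4 x (x+4) eq_refl).
  pose proof (av_b A x). pose proof (av_b A (x+1)). pose proof (av_b A (x+2)).
  pose proof (av_b A (x+3)). pose proof (av_b A (x+4)). lia.
Qed.

Lemma blk2 x : cntZ A x 2 <= 1.
Proof. rewrite (cnt2 A x (x+1)) by lia. apply pr1; lia. Qed.

Lemma blk3 x : cntZ A x 3 <= 2.
Proof. rewrite (cnt3 A x (x+1) (x+2)) by lia.
  pose proof (pr1 x (x+1) eq_refl). pose proof (av_b A (x+2)). pose proof (av_b A x). lia. Qed.

Lemma blk4 x : cntZ A x 4 <= 2.
Proof. rewrite (cnt4 A x (x+1) (x+2) (x+3)) by lia.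
  pose proof (pr1 x (x+1) eq_refl). pose proof (pr1 (x+2) (x+3) ltac:(lia)). lia. Qed.

Lemma blk5j j : 0 <= j -> forall x, cntZ A x (5*j) <= 2*j.
Proof.
  intros Hj. pattern j. apply natlike_ind; [| |exact Hj].
  - intros x. unfold cntZ; simpl; lia.
  - intros i Hi IH x. rewrite (cnt_split A x (5 * Z.succ i) (5*i) 5 (x + 5*i)) by lia.
    pose proof (IH x). pose proof (blk5 (x + 5*i)). lia.
Qed.

End Blocks.

Section Case0.
Variable M : Z. Hypothesis HM : 1 <= M.
Variable A : Z -> Prop.
Hypothesis HI : independent (S14k (5*M)) A.
Lemma win0 x : cntZ A x (5*M+1) <= 2*M.
Proof.
  pose proof (cnt_split A x (5*M+1) (5*M) 1 (x+5*M) ltac:(lia) ltac:(lia) ltac:(lia) ltac:(lia)) as E0.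
  pose proof (cnt_split A x (5*M+1) 1 (5*M) (x+1) ltac:(lia) ltac:(lia) ltac:(lia) ltac:(lia)) as E.
  rewrite !cnt1 in *.
  pose proof (blk5j _ _ HI M ltac:(lia) x). pose proof (blk5j _ _ HI M ltac:(lia) (x+1)).
  pose proof (prk _ _ HI x (x+5*M) ltac:(lia) ltac:(lia)). pose proof (av_b A x). pose proof (av_b A (x+5*M)). lia.
Qed.
End Case0.

Section Case2.
Variable M : Z. Hypothesis HM : 1 <= M.
Variable A : Z -> Prop.
Hypothesis HI : independent (S14k (5*M+2)) A.
Lemma win2 x : cntZ A x (5*M+3) <= 2*M+1.
Proof.
  pose proof (cnt_split A x (5*M+3) (5*M) 3 (x+5*M) ltac:(lia) ltac:(lia) ltac:(lia) ltac:(lia)) as E1.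
  pose proof (cnt_split A x (5*M+3) 3 (5*M) (x+3) ltac:(lia) ltac:(lia) ltac:(lia) ltac:(lia)) as E2.
  rewrite (cnt3 A x (x+1) (x+2)) in E2 by lia.
  rewrite (cnt3 A (x+5*M) (x+5*M+1) (x+5*M+2)) in E1 by lia.
  pose proof (blk5j _ _ HI M ltac:(lia) x). pose proof (blk5j _ _ HI M ltac:(lia) (x+3)).
  pose proof (prk _ _ HI x (x+5*M+2) ltac:(lia) ltac:(lia)).
  pose proof (pr1 _ _ HI x (x+1) ltac:(lia)).
  pose proof (pr1 _ _ HI (x+1) (x+2) ltac:(lia)).
  pose proof (pr1 _ _ HI (x+5*M) (x+5*M+1) ltac:(lia)).
  pose proof (pr1 _ _ HI (x+5*M+1) (x+5*M+2) ltac:(lia)).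
  pose proof (av_b A x). pose proof (av_b A (x+2)).
  pose proof (av_b A (x+5*M)). pose proof (av_b A (x+5*M+2)).
  pose proof (av_b A (x+1)). pose proof (av_b A (x+5*M+1)).
  lia.
Qed.
End Case2.

Section Case3.
Variable M : Z. Hypothesis HM : 1 <= M.
Variable A : Z -> Prop.
Hypothesis HI : independent (S14k (5*M+3)) A.

Let c x := cntZ A x (5*M+4).
Definition Pr y := cntZ A y (5*M+4) = 2*M+2 /\ av A y = 1.

Lemma c_le x : cntZ A x (5*M+4) <= 2*M+2.
Proof.
  rewrite (cnt_split A x (5*M+4) (5*M) 4 (x+5*M)) by lia.
  pose proof (blk5j _ _ HI M ltac:(lia) x). pose proof (blk4 _ _ HI (x+5*M)). lia.
Qed.

Ltac sp x L L1 L2 := pose proof (cnt_split A x L L1 L2 (x+L1) ltac:(lia) ltac:(lia) ltac:(lia) ltac:(lia)).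
Ltac b x := pose proof (av_b A x).

Lemma P_facts y : Pr y ->
  av A (y+1) = 0 /\ av A (y+2) = 1 /\ av A (y+3) = 0 /\ av A (y+4) = 0 /\ av A (y+5) = 1 /\
  av A (y-1) = 0 /\ av A (y-2) = 0 /\ av A (y-3) = 0 /\ av A (y-4) = 0 /\
  av A (y+5*M) = 1 /\ av A (y+5*M+1) = 0 /\ av A (y+5*M+2) = 1 /\ av A (y+5*M+3) = 0 /\
  av A (y+5*M+4) = 0 /\ av A (y+5*M+5) = 0 /\ av A (y+5*M+6) = 0.
Proof.
  intros [Hc Ha].
  assert (H1 : av A (y+1) = 0) by (pose proof (pr1 _ _ HI y (y+1) eq_refl); b (y+1); lia).
  assert (H2 : av A (y+5*M+3) = 0) by (pose proof (prk _ _ HI y (y+5*M+3) ltac:(lia) ltac:(lia)); b (y+5*M+3); lia).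
  assert (H3 : av A (y+2) = 1).
  { sp y (5*M+4) 3 (5*M+1). sp (y+3) (5*M+1) (5*M) 1.
    rewrite (cnt3 A y (y+1) (y+2)) in * by lia.
    replace (y+3+5*M) with (y+5*M+3) in * by lia. rewrite cnt1 in *.
    pose proof (blk5j _ _ HI M ltac:(lia) (y+3)). b (y+2). lia. }
  assert (H4 : av A (y+3) = 0) by (pose proof (pr1 _ _ HI (y+2) (y+3) ltac:(lia)); b (y+3); lia).
  assert (H5 : av A (y+4) = 0) by (pose proof (pr4 _ _ HI y (y+4) ltac:(lia)); b (y+4); lia).
  assert (H6 : av A (y+5*M+2) = 1).
  { sp y (5*M+4) 2 (5*M+2). sp (y+2) (5*M+2) (5*M) 2.
    rewrite (cnt2 A y (y+1)) in * by lia.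
    replace (y+2+5*M) with (y+5*M+2) in * by lia.
    rewrite (cnt2 A (y+5*M+2) (y+5*M+3)) in * by lia.
    pose proof (blk5j _ _ HI M ltac:(lia) (y+2)). b (y+5*M+2). lia. }
  assert (H7 : av A (y+5*M+1) = 0) by (pose proof (pr1 _ _ HI (y+5*M+1) (y+5*M+2) ltac:(lia)); b (y+5*M+1); lia).
  assert (H8 : av A (y+5*M) = 1).
  { sp y (5*M+4) (5*M) 4.
    rewrite (cnt4 A (y+5*M) (y+5*M+1) (y+5*M+2) (y+5*M+3)) in * by lia.
    pose proof (blk5j _ _ HI M ltac:(lia) y). b (y+5*M). lia. }
  assert (H9 : av A (y+5) = 1).
  { sp y (5*M+4) 5 (5*M-1). sp (y+5) (5*M-1) 4 (5*(M-1)).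
    rewrite (cnt5 A y (y+1) (y+2) (y+3) (y+4)) in * by lia.
    replace (y+5+4) with (y+9) in * by lia.
    rewrite (cnt4 A (y+5) (y+6) (y+7) (y+8)) in * by lia.
    pose proof (blk5j _ _ HI (M-1) ltac:(lia) (y+9)).
    pose proof (pr4 _ _ HI (y+2) (y+6) ltac:(lia)).
    pose proof (pr1 _ _ HI (y+7) (y+8) ltac:(lia)).
    b (y+5). b (y+6). b (y+7). b (y+8). lia. }
  pose proof (pr1 _ _ HI (y-1) y ltac:(lia)). b (y-1).
  pose proof (pr4 _ _ HI (y-2) (y+2) ltac:(lia)). b (y-2).
  pose proof (prk _ _ HI (y-3) (y+5*M) ltac:(lia) ltac:(lia)). b (y-3).
  pose proof (pr4 _ _ HI (y-4) y ltac:(lia)). b (y-4).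
  pose proof (pr4 _ _ HI (y+5*M) (y+5*M+4) ltac:(lia)). b (y+5*M+4).
  pose proof (prk _ _ HI (y+2) (y+5*M+5) ltac:(lia) ltac:(lia)). b (y+5*M+5).
  pose proof (pr4 _ _ HI (y+5*M+2) (y+5*M+6) ltac:(lia)). b (y+5*M+6).
  lia.
Qed.

Lemma P_right y : Pr y -> cntZ A (y+3) (5*M+4) = 2*M.
Proof.
  intros HP. pose proof (P_facts y HP). destruct HP as [Hc Ha].
  sp y (5*M+7) 3 (5*M+4). sp y (5*M+7) (5*M+4) 3.
  rewrite (cnt3 A y (y+1) (y+2)) in * by lia.
  rewrite (cnt3 A (y+(5*M+4)) (y+5*M+5) (y+5*M+6)) in * by lia.
  replace (y + (5*M+4)) with (y+5*M+4) in * by lia. lia.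
Qed.

Lemma P_left y : Pr y -> cntZ A (y-4) (5*M+4) = 2*M.
Proof.
  intros HP. pose proof (P_facts y HP). destruct HP as [Hc Ha].
  pose proof (cnt_split A (y-4) (5*M+8) 4 (5*M+4) y ltac:(lia) ltac:(lia) ltac:(lia) ltac:(lia)).
  pose proof (cnt_split A (y-4) (5*M+8) (5*M+4) 4 (y+5*M) ltac:(lia) ltac:(lia) ltac:(lia) ltac:(lia)).
  rewrite (cnt4 A (y-4) (y-3) (y-2) (y-1)) in * by lia.
  rewrite (cnt4 A (y+5*M) (y+5*M+1) (y+5*M+2) (y+5*M+3)) in * by lia. lia.
Qed.

Lemma heavy x : cntZ A x (5*M+4) >= 2*M+2 -> Pr x \/ Pr (x+1).
Proof.
  intros Hc. pose proof (c_le x).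
  sp x (5*M+4) 2 (5*M+2). sp (x+2) (5*M+2) (5*M) 2.
  pose proof (blk5j _ _ HI M ltac:(lia) (x+2)).
  pose proof (blk2 _ _ HI x). pose proof (blk2 _ _ HI (x+2+5*M)).
  rewrite (cnt2 A x (x+1)) in * by lia.
  destruct (Z.eq_dec (av A x) 1) as [E|E].
  - left. split; lia.
  - right. b x. b (x+1).
    sp x (5*M+5) 1 (5*M+4). sp x (5*M+5) (5*M+4) 1. rewrite !cnt1 in *.
    pose proof (c_le (x+1)). b (x + (5*M+4)). split; lia.
Qed.

Definition Pz y : Z := if excluded_middle_informative (Pr y) then 1 else 0.

Lemma pointwise x :
  cntZ A x (5*M+4) + Pz (x+4) + Pz (x-3) <= 2*M+1 + Pz x + Pz (x+1).
Proof.
  unfold Pz.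
  destruct (excluded_middle_informative (Pr (x+4))) as [P4|P4].
  - pose proof (P_left _ P4). replace (x+4-4) with x in * by lia.
    pose proof (P_facts _ P4) as F4.
    destruct (excluded_middle_informative (Pr (x-3))) as [P3|P3].
    + pose proof (P_facts _ P3) as F3. exfalso.
      replace (x+4-2) with (x+2) in F4 by lia. replace (x-3+5) with (x+2) in F3 by lia. lia.
    + destruct (excluded_middle_informative (Pr x)) as [P0|P0].
      * destruct P0. replace (x+4-4) with x in F4 by lia. lia.
      * destruct (excluded_middle_informative (Pr (x+1))) as [P1|P1].
        -- destruct P1. replace (x+4-3) with (x+1) in F4 by lia. lia.
        -- lia.
  - destruct (excluded_middle_informative (Pr (x-3))) as [P3|P3].
    + pose proof (P_right _ P3). replace (x-3+3) with x in * by lia.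
      pose proof (P_facts _ P3) as F3.
      destruct (excluded_middle_informative (Pr x)) as [P0|P0].
      * destruct P0. replace (x-3+3) with x in F3 by lia. lia.
      * destruct (excluded_middle_informative (Pr (x+1))) as [P1|P1].
        -- destruct P1. replace (x-3+4) with (x+1) in F3 by lia. lia.
        -- lia.
    + pose proof (c_le x).
      destruct (Z_le_gt_dec (cntZ A x (5*M+4)) (2*M+1)).
      * destruct (excluded_middle_informative (Pr x));
        destruct (excluded_middle_informative (Pr (x+1))); lia.
      * destruct (heavy x ltac:(lia)) as [P|P];
        destruct (excluded_middle_informative (Pr x));
        destruct (excluded_middle_informative (Pr (x+1))); try tauto; lia.
Qed.

End Case3.

Lemma tele (f g : Z -> Z) K : (forall x, 0 <= g x <= 1) ->
  (forall x, f x + g (x+4) + g (x-3) <= K + g x + g (x+1)) ->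
  forall u T, sumc f u T <= K * Z.of_nat T + 6.
Proof.
  intros Hg Hp u.
  assert (Inv : forall T, let z := u + Z.of_nat T in
    sumc f u T <= K * Z.of_nat T + (g (z-1) + g (z-2) + g (z-3)) - (g (u-1) + g (u-2) + g (u-3))
      + (g (u+1) + g (u+2) + g (u+3)) - (g (z+1) + g (z+2) + g (z+3))).
  { induction T; intros z; subst z.
    - simpl. rewrite Z.add_0_r. lia.
    - simpl sumc. rewrite Nat2Z.inj_succ.
      set (z := u + Z.of_nat T) in *.
      replace (u + Z.succ (Z.of_nat T)) with (z + 1) by (subst z; lia).
      replace (z+1-1) with z by lia. replace (z+1-2) with (z-1) by lia.
      replace (z+1-3) with (z-2) by lia. replace (z+1+1) with (z+2) by lia.
      replace (z+1+2) with (z+3) by lia. replace (z+1+3) with (z+4) by lia.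
      pose proof (Hp z). cbv zeta in IHT. lia. }
  intros T. specialize (Inv T). simpl in Inv.
  pose proof (Hg (u-1)). pose proof (Hg (u-2)). pose proof (Hg (u-3)).
  pose proof (Hg (u+1)). pose proof (Hg (u+2)). pose proof (Hg (u+3)).
  pose proof (Hg (u + Z.of_nat T - 1)). pose proof (Hg (u + Z.of_nat T - 2)).
  pose proof (Hg (u + Z.of_nat T - 3)). pose proof (Hg (u + Z.of_nat T + 1)).
  pose proof (Hg (u + Z.of_nat T + 2)). pose proof (Hg (u + Z.of_nat T + 3)).
  lia.
Qed.

Lemma cnt_nat A x L : cntZ A x (Z.of_nat L) = sumc (av A) x L.
Proof. unfold cntZ. rewrite Nat2Z.id. auto. Qed.

Lemma swap A u T L : sumc (fun x => sumc (av A) x L) u T = sumc (fun i => sumc (av A) i T) u L.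
Proof.
  induction L.
  - simpl. induction T; simpl; lia.
  - simpl. rewrite sumc_plus. rewrite IHL. f_equal.
    rewrite (sumc_shift (av A) (Z.of_nat L) u T). auto.
Qed.

Lemma cnt_shift_le A u i T : 0 <= i -> 0 <= T -> cntZ A u T <= cntZ A (u+i) T + i.
Proof.
  intros Hi HT.
  pose proof (cnt_split A u (i+T) i T (u+i) ltac:(lia) ltac:(lia) ltac:(lia) ltac:(lia)).
  pose proof (cnt_split A u (i+T) T i (u+T) ltac:(lia) ltac:(lia) ltac:(lia) ltac:(lia)).
  pose proof (cnt_b A u i Hi). pose proof (cnt_b A (u+T) i Hi). lia.
Qed.

Lemma cnt_shift_ge A u i T : 0 <= i -> 0 <= T -> cntZ A (u+i) T <= cntZ A u T + i.
Proof.
  intros Hi HT.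
  pose proof (cnt_split A u (i+T) i T (u+i) ltac:(lia) ltac:(lia) ltac:(lia) ltac:(lia)).
  pose proof (cnt_split A u (i+T) T i (u+T) ltac:(lia) ltac:(lia) ltac:(lia) ltac:(lia)).
  pose proof (cnt_b A u i Hi). pose proof (cnt_b A (u+T) i Hi). lia.
Qed.

Lemma upper_gen A (n : nat) num C :
  (forall u T, sumc (fun x => cntZ A x (Z.of_nat n)) u T <= num * Z.of_nat T + C) ->
  forall u T, Z.of_nat n * cntZ A u (Z.of_nat T) <= num * Z.of_nat T + C + Z.of_nat n * Z.of_nat n.
Proof.
  intros H u T. specialize (H u T).
  rewrite (sumc_ext _ (fun x => sumc (av A) x n)) in H by (intros; apply cnt_nat).
  rewrite swap in H.
  assert (forall L, Z.of_nat L * cntZ A u (Z.of_nat T) <= sumc (fun i => sumc (av A) i T) u L + Z.of_nat L * Z.of_nat L).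
  { induction L; simpl sumc; [lia|].
    pose proof (cnt_shift_le A u (Z.of_nat L) (Z.of_nat T) ltac:(lia) ltac:(lia)).
    rewrite (cnt_nat A (u + Z.of_nat L)) in H0. rewrite Nat2Z.inj_succ. nia. }
  specialize (H0 n). lia.
Qed.

Lemma lower_gen A (n : nat) num :
  (forall x, num <= cntZ A x (Z.of_nat n)) ->
  forall u T, num * Z.of_nat T <= Z.of_nat n * cntZ A u (Z.of_nat T) + Z.of_nat n * Z.of_nat n.
Proof.
  intros H u T.
  assert (E1 : num * Z.of_nat T <= sumc (fun x => sumc (av A) x n) u T).
  { clear -H. induction T; simpl sumc; [lia|]. specialize (H (u + Z.of_nat T)).
    rewrite cnt_nat in H. rewrite Nat2Z.inj_succ. lia. }
  rewrite swap in E1.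
  assert (forall L, sumc (fun i => sumc (av A) i T) u L <= Z.of_nat L * cntZ A u (Z.of_nat T) + Z.of_nat L * Z.of_nat L).
  { induction L; simpl sumc; [lia|].
    pose proof (cnt_shift_ge A u (Z.of_nat L) (Z.of_nat T) ltac:(lia) ltac:(lia)).
    rewrite (cnt_nat A (u + Z.of_nat L)) in H0. rewrite Nat2Z.inj_succ. nia. }
  specialize (H0 n). lia.
Qed.
Close Scope Z_scope.

Lemma sumc_S f u T : sumc f u (S T) = (sumc f u T + f (u + Z.of_nat T))%Z.
Proof. reflexivity. Qed.

Lemma ind_av (A : Z -> Prop) (z : Z) : Defs.ind A z = IZR (av A z).
Proof. unfold Defs.ind, av. destruct excluded_middle_informative; reflexivity. Qed.

Lemma count_eq (A : Z -> Prop) (N : nat) : count_in A N = IZR (cntZ A (- Z.of_nat N) (Z.of_nat (2*N+1))).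
Proof.
  unfold count_in. rewrite cnt_nat.
  replace (2*N+1)%nat with (S (2*N)) by lia.
  generalize (2*N)%nat. intros L. induction L.
  - simpl. rewrite ind_av. f_equal. f_equal. lia.
  - rewrite tech5. rewrite IHL. rewrite (sumc_S _ _ (S L)). rewrite plus_IZR. f_equal.
    rewrite ind_av. f_equal. f_equal. lia.
Qed.

Lemma lim_aux l b : is_lim_seq (fun N => l + b / (2*INR N + 1)) l.
Proof.
  apply is_lim_seq_spec. intros eps.
  destruct (nfloor_ex (Rabs b / eps)) as [n0 Hn0].
  { apply Rmult_le_pos; [apply Rabs_pos| left; apply Rinv_0_lt_compat; apply cond_pos]. }
  exists (S n0). intros N HN.
  assert (HNr : INR N >= INR n0 + 1) by (rewrite <- S_INR; apply Rle_ge, le_INR; lia).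
  pose proof (cond_pos eps) as Pe.
  replace (l + b / (2 * INR N + 1) - l) with (b / (2 * INR N + 1)) by ring.
  assert (P : 0 < 2 * INR N + 1) by (pose proof (pos_INR N); lra).
  unfold Rdiv. rewrite Rabs_mult, Rabs_inv, (Rabs_right (2 * INR N + 1)) by lra.
  apply (Rmult_lt_reg_r (2 * INR N + 1)); auto.
  rewrite Rmult_assoc, Rinv_l by lra.
  assert (Rabs b < eps * (INR n0 + 1)).
  { destruct Hn0 as [_ H2]. apply (Rmult_lt_compat_r eps) in H2; auto.
    unfold Rdiv in H2. rewrite Rmult_assoc, Rinv_l in H2 by lra. lra. }
  pose proof (pos_INR n0). nra.
Qed.

Lemma limsup_of_lim u l : is_lim_seq u l -> LimSup_seq u = l.
Proof. intros H. apply is_LimSup_seq_unique, is_lim_LimSup_seq, H. Qed.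

Lemma dens_upper (A : Z -> Prop) (n : nat) (num C : Z) : (0 < n)%nat ->
  (forall u T, (Z.of_nat n * cntZ A u (Z.of_nat T) <= num * Z.of_nat T + C)%Z) ->
  Rbar_le (density A) (IZR num / INR n).
Proof.
  intros Hn H. unfold density.
  eapply Rbar_le_trans.
  - apply (LimSup_le _ (fun N => IZR num / INR n + (IZR C / INR n) / (2*INR N + 1))).
    exists O. intros N _.
    rewrite count_eq. specialize (H (- Z.of_nat N)%Z (2*N+1)%nat).
    apply IZR_le in H. rewrite mult_IZR, plus_IZR, mult_IZR in H.
    rewrite <- !INR_IZR_INZ in H. rewrite plus_INR, mult_INR in H. simpl (INR 2) in H.
    simpl (INR 1) in H.
    assert (P : 0 < 2 * INR N + 1) by (pose proof (pos_INR N); lra).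
    assert (Pn : 0 < INR n) by (apply lt_0_INR; lia).
    apply (Rmult_le_reg_r (2 * INR N + 1)); auto.
    apply (Rmult_le_reg_r (INR n)); auto.
    field_simplify; try lra; nra.
  - rewrite (limsup_of_lim _ _ (lim_aux _ _)). apply Rbar_le_refl.
Qed.

Lemma dens_exact (A : Z -> Prop) (n : nat) (num C : Z) : (0 < n)%nat ->
  (forall u T, (Z.of_nat n * cntZ A u (Z.of_nat T) <= num * Z.of_nat T + C)%Z) ->
  (forall u T, (num * Z.of_nat T <= Z.of_nat n * cntZ A u (Z.of_nat T) + C)%Z) ->
  density A = Finite (IZR num / INR n).
Proof.
  intros Hn H1 H2. unfold density. apply limsup_of_lim.
  assert (Pn : 0 < INR n) by (apply lt_0_INR; lia).
  apply (is_lim_seq_le_le (fun N => IZR num / INR n + (- IZR C / INR n) / (2*INR N + 1)) _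
     (fun N => IZR num / INR n + (IZR C / INR n) / (2*INR N + 1)));
   [ intros N; split | apply lim_aux | apply lim_aux ].
  all: rewrite count_eq.
  all: assert (P : 0 < 2 * INR N + 1) by (pose proof (pos_INR N); lra).
  - specialize (H2 (- Z.of_nat N)%Z (2*N+1)%nat).
    apply IZR_le in H2. rewrite mult_IZR, plus_IZR, mult_IZR in H2.
    rewrite <- !INR_IZR_INZ in H2. rewrite plus_INR, mult_INR in H2. simpl (INR 2) in H2.
    simpl (INR 1) in H2.
    apply (Rmult_le_reg_r (2 * INR N + 1)); auto.
    apply (Rmult_le_reg_r (INR n)); auto.
    field_simplify; try lra; nra.
  - specialize (H1 (- Z.of_nat N)%Z (2*N+1)%nat).
    apply IZR_le in H1. rewrite mult_IZR, plus_IZR, mult_IZR in H1.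
    rewrite <- !INR_IZR_INZ in H1. rewrite plus_INR, mult_INR in H1. simpl (INR 2) in H1.
    simpl (INR 1) in H1.
    apply (Rmult_le_reg_r (2 * INR N + 1)); auto.
    apply (Rmult_le_reg_r (INR n)); auto.
    field_simplify; try lra; nra.
Qed.
Open Scope Z_scope.

Definition perA (n : Z) (B : Z -> Prop) : Z -> Prop := fun x => B (x mod n).

Lemma mod_shift n x d : 0 < n -> 0 <= d < n ->
  (x + d) mod n = x mod n + d \/ (x + d) mod n = x mod n + d - n.
Proof.
  intros Hn Hd. rewrite <- Z.add_mod_idemp_l by lia.
  pose proof (Z.mod_pos_bound x n Hn).
  destruct (Z_lt_ge_dec (x mod n + d) n).
  - left. apply Z.mod_small; lia.
  - right. replace ((x mod n + d) mod n) with (((x mod n + d - n) + 1 * n) mod n) by (f_equal; lia).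
    rewrite Z_mod_plus_full. apply Z.mod_small; lia.
Qed.

Lemma per_indep n k B : 4 < k < n ->
  (forall r r', 0 <= r < n -> 0 <= r' < n -> B r -> B r' ->
     r' - r <> 1 /\ r' - r <> 4 /\ r' - r <> k /\ r' - r <> 1 - n /\ r' - r <> 4 - n /\ r' - r <> k - n) ->
  independent (S14k k) (perA n B).
Proof.
  intros Hk HB i j Hi Hj HS. unfold perA in *. unfold S14k in HS.
  assert (Hd : 0 < Z.abs (i - j) < n) by lia.
  pose proof (Z.mod_pos_bound i n ltac:(lia)). pose proof (Z.mod_pos_bound j n ltac:(lia)).
  destruct (Z_le_gt_dec i j).
  - replace j with (i + (j - i)) in Hj, H0 by lia.
    destruct (mod_shift n i (j - i) ltac:(lia) ltac:(lia)) as [E|E]; rewrite E in Hj, H0;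
    pose proof (HB _ _ H H0 Hi Hj); lia.
  - replace i with (j + (i - j)) in Hi, H by lia.
    destruct (mod_shift n j (i - j) ltac:(lia) ltac:(lia)) as [E|E]; rewrite E in Hi, H;
    pose proof (HB _ _ H0 H Hj Hi); lia.
Qed.

Lemma per_av_eq n B x : 0 < n -> av (perA n B) (x + n) = av (perA n B) x.
Proof.
  intros Hn. unfold av, perA.
  replace (x + n) with (x + 1 * n) by lia. rewrite Z_mod_plus_full. reflexivity.
Qed.

Lemma per_shift n B x : 0 < n -> cntZ (perA n B) (x+1) n = cntZ (perA n B) x n.
Proof.
  intros Hn.
  pose proof (cnt_split (perA n B) x (n+1) 1 n (x+1) ltac:(lia) ltac:(lia) ltac:(lia) ltac:(lia)).
  pose proof (cnt_split (perA n B) x (n+1) n 1 (x+n) ltac:(lia) ltac:(lia) ltac:(lia) ltac:(lia)).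
  rewrite !cnt1 in *. rewrite per_av_eq in * by lia. lia.
Qed.

Lemma per_const n B x : 0 < n -> cntZ (perA n B) x n = cntZ (perA n B) 0 n.
Proof.
  intros Hn. induction x using Z.peano_ind; auto.
  - rewrite <- Z.add_1_r, per_shift; auto.
  - rewrite <- IHx. rewrite <- (per_shift n B (Z.pred x)) by lia. f_equal. lia.
Qed.

Lemma av_in1 n B x : 0 <= x < n -> B x -> av (perA n B) x = 1.
Proof. intros H Hb. apply av_1. unfold perA. rewrite Z.mod_small by lia. auto. Qed.
Lemma av_in0 n B x : 0 <= x < n -> ~ B x -> av (perA n B) x = 0.
Proof. intros H Hb. apply av_0. unfold perA. rewrite Z.mod_small by lia. auto. Qed.

Definition Bf (J : Z) (E : Z -> Prop) (r : Z) : Prop :=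
  (0 <= r < 5*J /\ (r mod 5 = 0 \/ r mod 5 = 2)) \/ E r.

Lemma base_count n J E : 0 <= J -> 5*J <= n -> (forall r, E r -> 5*J <= r) ->
  forall j, 0 <= j <= J -> cntZ (perA n (Bf J E)) 0 (5*j) = 2*j.
Proof.
  intros HJ Hn HE j Hj.
  assert (0 <= j) by lia. revert Hj. pattern j. apply natlike_ind; [| |exact H].
  - intros. unfold cntZ; simpl. lia.
  - intros i Hi IH Hs.
    rewrite (cnt_split _ 0 (5 * Z.succ i) (5*i) 5 (0 + 5*i)) by lia.
    rewrite IH by lia.
    rewrite (cnt5 _ (0+5*i) (5*i+1) (5*i+2) (5*i+3) (5*i+4)) by lia.
    rewrite (av_in1 n _ (0+5*i)), (av_in0 n _ (5*i+1)), (av_in1 n _ (5*i+2)),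
      (av_in0 n _ (5*i+3)), (av_in0 n _ (5*i+4)); try lia;
    unfold Bf; try (intros [[? ?]| ?%HE]); try Z.to_euclidean_division_equations; try lia.
    all: left; split; [lia|]; Z.to_euclidean_division_equations; lia.
Qed.

Definition E0 M r := r = 5*M-5 \/ r = 5*M-2.
Definition E2 M r := r = 5*M.
Definition E3 M r := r = 5*M-5 \/ r = 5*M-2 \/ r = 5*M+1.

Lemma circ0 M : 1 <= M -> forall r r', 0 <= r < 5*M+1 -> 0 <= r' < 5*M+1 ->
  Bf (M-1) (E0 M) r -> Bf (M-1) (E0 M) r' ->
  let n := 5*M+1 in let k := 5*M in
  r' - r <> 1 /\ r' - r <> 4 /\ r' - r <> k /\ r' - r <> 1 - n /\ r' - r <> 4 - n /\ r' - r <> k - n.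
Proof. intros HM r r' H1 H2 HB1 HB2; cbv zeta; unfold Bf, E0 in *. Z.to_euclidean_division_equations. lia. Qed.

Lemma circ2 M : 1 <= M -> forall r r', 0 <= r < 5*M+3 -> 0 <= r' < 5*M+3 ->
  Bf M (E2 M) r -> Bf M (E2 M) r' ->
  let n := 5*M+3 in let k := 5*M+2 in
  r' - r <> 1 /\ r' - r <> 4 /\ r' - r <> k /\ r' - r <> 1 - n /\ r' - r <> 4 - n /\ r' - r <> k - n.
Proof. intros HM r r' H1 H2 HB1 HB2; cbv zeta; unfold Bf, E2 in *. Z.to_euclidean_division_equations. lia. Qed.

Lemma circ3 M : 1 <= M -> forall r r', 0 <= r < 5*M+4 -> 0 <= r' < 5*M+4 ->
  Bf (M-1) (E3 M) r -> Bf (M-1) (E3 M) r' ->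
  let n := 5*M+4 in let k := 5*M+3 in
  r' - r <> 1 /\ r' - r <> 4 /\ r' - r <> k /\ r' - r <> 1 - n /\ r' - r <> 4 - n /\ r' - r <> k - n.
Proof. intros HM r r' H1 H2 HB1 HB2; cbv zeta; unfold Bf, E3 in *. Z.to_euclidean_division_equations. lia. Qed.

Ltac decB := unfold Bf, E0, E2, E3; Z.to_euclidean_division_equations; lia.
Ltac decNB := unfold Bf, E0, E2, E3; intros ?HH; Z.to_euclidean_division_equations; lia.

Lemma count2 M : 1 <= M -> forall x, cntZ (perA (5*M+3) (Bf M (E2 M))) x (5*M+3) = 2*M+1.
Proof.
  intros HM x. rewrite per_const by lia.
  rewrite (cnt_split _ 0 (5*M+3) (5*M) 3 (0+5*M)) by lia.
  rewrite (base_count (5*M+3) M (E2 M)) by (unfold E2; lia).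
  rewrite (cnt3 _ (0+5*M) (5*M+1) (5*M+2)) by lia.
  rewrite (av_in1 _ _ (0+5*M)), (av_in0 _ _ (5*M+1)), (av_in0 _ _ (5*M+2)); try lia; try decB; decNB.
Qed.

Lemma count0 M : 1 <= M -> forall x, cntZ (perA (5*M+1) (Bf (M-1) (E0 M))) x (5*M+1) = 2*M.
Proof.
  intros HM x. rewrite per_const by lia.
  rewrite (cnt_split _ 0 (5*M+1) (5*(M-1)) 6 (0+5*(M-1))) by lia.
  rewrite (base_count (5*M+1) (M-1) (E0 M)) by (unfold E0; lia).
  rewrite (cnt_split _ (0+5*(M-1)) 6 3 3 (5*M-2)) by lia.
  rewrite (cnt3 _ (0+5*(M-1)) (5*M-4) (5*M-3)) by lia.
  rewrite (cnt3 _ (5*M-2) (5*M-1) (5*M)) by lia.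
  rewrite (av_in1 _ _ (0+5*(M-1))), (av_in0 _ _ (5*M-4)), (av_in0 _ _ (5*M-3)),
    (av_in1 _ _ (5*M-2)), (av_in0 _ _ (5*M-1)), (av_in0 _ _ (5*M)); try lia; try decB; decNB.
Qed.

Lemma count3 M : 1 <= M -> forall x, cntZ (perA (5*M+4) (Bf (M-1) (E3 M))) x (5*M+4) = 2*M+1.
Proof.
  intros HM x. rewrite per_const by lia.
  rewrite (cnt_split _ 0 (5*M+4) (5*(M-1)) 9 (0+5*(M-1))) by lia.
  rewrite (base_count (5*M+4) (M-1) (E3 M)) by (unfold E3; lia).
  rewrite (cnt_split _ (0+5*(M-1)) 9 3 6 (5*M-2)) by lia.
  rewrite (cnt_split _ (5*M-2) 6 3 3 (5*M+1)) by lia.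
  rewrite (cnt3 _ (0+5*(M-1)) (5*M-4) (5*M-3)) by lia.
  rewrite (cnt3 _ (5*M-2) (5*M-1) (5*M)) by lia.
  rewrite (cnt3 _ (5*M+1) (5*M+2) (5*M+3)) by lia.
  rewrite (av_in1 _ _ (0+5*(M-1))), (av_in0 _ _ (5*M-4)), (av_in0 _ _ (5*M-3)),
    (av_in1 _ _ (5*M-2)), (av_in0 _ _ (5*M-1)), (av_in0 _ _ (5*M)),
    (av_in1 _ _ (5*M+1)), (av_in0 _ _ (5*M+2)), (av_in0 _ _ (5*M+3)); try lia; try decB; decNB.
Qed.
Close Scope Z_scope.

Lemma ratio_lemma (S : Z -> Prop) (n : nat) (num C : Z) (A0 : Z -> Prop) : (0 < n)%nat ->
  (forall A, independent S A -> forall u T,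
     (Z.of_nat n * cntZ A u (Z.of_nat T) <= num * Z.of_nat T + C)%Z) ->
  independent S A0 ->
  (forall u T, (num * Z.of_nat T <= Z.of_nat n * cntZ A0 u (Z.of_nat T) + C)%Z) ->
  indep_ratio S = Finite (IZR num / INR n).
Proof.
  intros Hn Hup HA0 Hlo. unfold indep_ratio. apply is_lub_Rbar_unique. split.
  - intros d [A [HA Hd]]. pose proof (dens_upper A n num C Hn (Hup A HA)). rewrite Hd in H. exact H.
  - intros b Hb. apply Hb. exists A0. split; auto.
    apply (dens_exact A0 n num C Hn (Hup A0 HA0) Hlo).
Qed.

Definition A5 := perA 5 (Bf 1 (fun _ => False)).

Lemma A5_indep k : (4 < k)%Z -> (k mod 5 = 1 \/ k mod 5 = 4)%Z -> independent (S14k k) A5.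
Proof.
  intros Hk Hm i j Hi Hj HS. unfold A5, perA, Bf, S14k in *.
  Z.to_euclidean_division_equations. lia.
Qed.

Lemma A5_count x : cntZ A5 x 5 = 2%Z.
Proof.
  unfold A5. rewrite per_const by lia.
  pose proof (base_count 5 1 (fun _ => False) ltac:(lia) ltac:(lia) (fun r (H : False) => False_ind _ H) 1 ltac:(lia)).
  exact H.
Qed.

Lemma sum_le (f : Z -> Z) K : (forall x, (f x <= K)%Z) -> forall u T, (sumc f u T <= K * Z.of_nat T + 0)%Z.
Proof. intros H u T. induction T; simpl sumc; [lia|]. specialize (H (u + Z.of_nat T)%Z). lia. Qed.

Lemma main_gen (k : Z) (nz num : Z) (A0 : Z -> Prop) C : (0 < nz)%Z -> (0 <= C)%Z ->
  (forall A, independent (S14k k) A -> forall u T,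
     (sumc (fun x => cntZ A x nz) u T <= num * Z.of_nat T + C)%Z) ->
  independent (S14k k) A0 ->
  (forall x, (num <= cntZ A0 x nz)%Z) ->
  indep_ratio (S14k k) = Finite (IZR num / IZR nz).
Proof.
  intros Hn HC Hup HA0 Hlo.
  assert (E : nz = Z.of_nat (Z.to_nat nz)) by lia.
  rewrite E. rewrite <- INR_IZR_INZ.
  apply (ratio_lemma _ (Z.to_nat nz) num (C + nz * nz) A0); auto.
  - lia.
  - intros A HA u T. rewrite <- E.
    pose proof (upper_gen A (Z.to_nat nz) num C) as U. rewrite <- E in U.
    assert (U' := U ltac:(intros; apply Hup; auto) u T). lia.
  - intros u T. pose proof (lower_gen A0 (Z.to_nat nz) num) as L. rewrite <- E in L.
    pose proof (L Hlo u T). lia.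
Qed.

Theorem theorem32 (k : Z) : (4 < k)%Z ->
  indep_ratio (S14k k) =
  Finite (let kr := IZR k in
          match Z.modulo k 5 with
          | 0%Z => 2 * kr / (5 * kr + 5)
          | 1%Z => 2 / 5
          | 2%Z => (2 * kr + 1) / (5 * kr + 5)
          | 3%Z => (2 * kr - 1) / (5 * kr + 5)
          | _ => 2 / 5
          end).
Proof.
  intros Hk.
  pose proof (Z.div_mod k 5 ltac:(lia)) as Ek. pose proof (Z.mod_pos_bound k 5 ltac:(lia)) as Br.
  set (M := (k / 5)%Z) in *. set (r := (k mod 5)%Z) in *.
  assert (HM : (1 <= M)%Z) by lia.
  assert (Hr : r = 0%Z \/ r = 1%Z \/ r = 2%Z \/ r = 3%Z \/ r = 4%Z) by lia.
  assert (Ekr : IZR k = 5 * IZR M + IZR r) by (rewrite Ek at 1; rewrite plus_IZR, mult_IZR; reflexivity).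
  cbv zeta.
  destruct Hr as [Hr|[Hr|[Hr|[Hr|Hr]]]]; rewrite Hr in *.
  -
    replace k with (5*M)%Z in * by lia.
    rewrite (main_gen (5*M) (5*M+1) (2*M) (perA (5*M+1) (Bf (M-1) (E0 M))) 0); try lia.
    + f_equal. rewrite Ekr. rewrite plus_IZR, mult_IZR, mult_IZR. field.
      assert (0 < IZR M) by (apply IZR_lt; lia). split; lra.
    + intros A HA u T. apply sum_le. intros x. apply (win0 M HM A HA).
    + apply per_indep; [lia|]. intros. apply circ0; auto.
    + intros x. rewrite count0; lia.
  - rewrite (main_gen k 5 2 A5 0); try lia.
    + f_equal; lra.
    + intros A HA u T. apply sum_le. intros x. apply (blk5 k A HA).
    + apply A5_indep; lia.
    + intros x. rewrite A5_count. lia.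
  - replace k with (5*M+2)%Z in * by lia.
    rewrite (main_gen (5*M+2) (5*M+3) (2*M+1) (perA (5*M+3) (Bf M (E2 M))) 0); try lia.
    + f_equal. rewrite Ekr. rewrite !plus_IZR, !mult_IZR. field.
      assert (0 < IZR M) by (apply IZR_lt; lia). lra.
    + intros A HA u T. apply sum_le. intros x. apply (win2 M HM A HA).
    + apply per_indep; [lia|]. intros. apply circ2; auto.
    + intros x. rewrite count2; lia.
  - replace k with (5*M+3)%Z in * by lia.
    rewrite (main_gen (5*M+3) (5*M+4) (2*M+1) (perA (5*M+4) (Bf (M-1) (E3 M))) 6); try lia.
    + f_equal. rewrite Ekr. rewrite !plus_IZR, !mult_IZR. field.
      assert (0 < IZR M) by (apply IZR_lt; lia). lra.
    + intros A HA u T.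
      apply (tele _ (Pz M A) (2*M+1)).
      * intros y. unfold Pz. destruct excluded_middle_informative; lia.
      * intros y. apply (pointwise M HM A HA).
    + apply per_indep; [lia|]. intros. apply circ3; auto.
    + intros x. rewrite count3; lia.
  - rewrite (main_gen k 5 2 A5 0); try lia.
    + f_equal; lra.
    + intros A HA u T. apply sum_le. intros x. apply (blk5 k A HA).
    + apply A5_indep; lia.
    + intros x. rewrite A5_count. lia.
Qed.
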